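(* Let $b_1,b_2,b_3\in\mathbb{R}$ with $b_1b_2b_3\neq 0$ and $b_2b_3<0$, and consider the system $$\dot x_1=b_1x_2,\qquad \dot x_2=b_2x_1x_3,\qquad \dot x_3=b_3x_1x_2 .$$ Let $H>0$ be a constant and set $\gamma=\sqrt{-b_3/b_2}$. Then the solution of this system restricted to the constant level surface $$x_2^2-\frac{b_2}{b_3}x_3^2=2H$$ is $$x_1(t)=\frac{\gamma}{b_3}\dot\theta(t),\qquad x_2(t)=\sqrt{2H}\cos\theta(t),\qquad x_3(t)=\gamma\sqrt{2H}\sin\theta(t),$$ where $\theta(t)$ is a solution of the pendulum equation $$\ddot\theta(t)=\frac{b_1b_3}{\gamma}\sqrt{2H}\cos\theta(t).$$ *)

(* Defs.v *)
From Stdlib Require Import Reals.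
From Coquelicot Require Import Coquelicot.
Open Scope R_scope.

Definition gamma (b2 b3 : R) : R := sqrt (- b3 / b2).

Definition is_solution (b1 b2 b3 : R) (x1 x2 x3 : R -> R) : Prop :=
  forall t : R,
    is_derive x1 t (b1 * x2 t) /\
    is_derive x2 t (b2 * x1 t * x3 t) /\
    is_derive x3 t (b3 * x1 t * x2 t).

Definition on_level (b2 b3 H : R) (x2 x3 : R -> R) : Prop :=
  forall t : R, x2 t ^ 2 - b2 / b3 * x3 t ^ 2 = 2 * H.

Definition is_pendulum_solution (b1 b2 b3 H : R) (theta dtheta : R -> R) : Prop :=
  forall t : R,
    is_derive theta t (dtheta t) /\
    is_derive dtheta t (b1 * b3 / gamma b2 b3 * sqrt (2 * H) * cos (theta t)).

(* Main.v *)
Require Import Defs.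
From Stdlib Require Import Reals Lra Psatz.
From Coquelicot Require Import Coquelicot.
Open Scope R_scope.
Lemma angle (A B : R) : A^2 + B^2 = 1 -> exists p, cos p = A /\ sin p = B.
Proof.
intros h. assert (hA : -1 <= A <= 1) by nra.
assert (hs : sqrt (1 - A²) = Rabs B).
{ replace (1 - A²) with (B²) by (unfold Rsqr; nra). apply sqrt_Rsqr_abs. }
destruct (Rle_or_lt 0 B) as [hB|hB].
- exists (acos A). split. apply cos_acos; auto. rewrite sin_acos, hs; auto. apply Rabs_pos_eq; auto.
- exists (- acos A). rewrite cos_neg, sin_neg. split. apply cos_acos; auto.
  rewrite sin_acos, hs; auto. rewrite Rabs_left; lra.
Qed.

Lemma antider (D : R -> R) : (forall t, continuous D t) ->
  forall t, is_derive (fun t => RInt D 0 t) t (D t).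
Proof.
intros hc t. apply (is_derive_RInt D _ 0); auto.
apply filter_forall. intros b. apply (RInt_correct (V:=R_CompleteNormedModule)). apply ex_RInt_continuous. intros; auto.
Qed.
Ltac subst_derivs :=
  repeat match goal with
  | h : is_derive ?f ?t ?df |- context [Derive (fun x => ?f x) ?t] =>
      replace (Derive (fun x => f x) t) with df by (symmetry; apply is_derive_unique; exact h)
  end.
Ltac exd := repeat match goal with
  | |- _ /\ _ => split | |- True => exact I
  | h : is_derive ?f ?t _ |- ex_derive _ ?t => eexists; exact h end.

Theorem proposition2p2 (b1 b2 b3 H : R)
  (hb : b1 * b2 * b3 <> 0) (hb23 : b2 * b3 < 0) (hH : 0 < H) :
  (forall x1 x2 x3 : R -> R,
     is_solution b1 b2 b3 x1 x2 x3 ->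
     on_level b2 b3 H x2 x3 ->
     exists theta dtheta : R -> R,
       is_pendulum_solution b1 b2 b3 H theta dtheta /\
       forall t : R,
         x1 t = gamma b2 b3 / b3 * dtheta t /\
         x2 t = sqrt (2 * H) * cos (theta t) /\
         x3 t = gamma b2 b3 * sqrt (2 * H) * sin (theta t)) /\
  (forall theta dtheta : R -> R,
     is_pendulum_solution b1 b2 b3 H theta dtheta ->
     let x1 := fun t => gamma b2 b3 / b3 * dtheta t in
     let x2 := fun t => sqrt (2 * H) * cos (theta t) in
     let x3 := fun t => gamma b2 b3 * sqrt (2 * H) * sin (theta t) in
     is_solution b1 b2 b3 x1 x2 x3 /\ on_level b2 b3 H x2 x3).
Proof.
assert (hb1 : b1 <> 0) by (intro; subst; apply hb; ring).
assert (hb2 : b2 <> 0) by (intro; subst; apply hb; ring).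
assert (hb3 : b3 <> 0) by (intro; subst; apply hb; ring).
assert (hpos : 0 < - b3 / b2).
{ replace (- b3 / b2) with (- (b2 * b3) / (b2 * b2)) by (field; auto).
  apply Rdiv_lt_0_compat. lra. nra. }
set (g := gamma b2 b3).
assert (hg : 0 < g) by (apply sqrt_lt_R0; exact hpos).
assert (hg2 : g * g = - b3 / b2) by (apply sqrt_sqrt; lra).
assert (hb2e : b2 = - b3 / (g * g)) by (rewrite hg2; field; auto).
set (s := sqrt (2 * H)).
assert (hs : 0 < s) by (apply sqrt_lt_R0; lra).
assert (hs2 : s * s = 2 * H) by (apply sqrt_sqrt; lra).
split.
- intros x1 x2 x3 sol lev.
  set (D := fun t => b3 / g * x1 t).
  assert (hD : forall t, is_derive D t (b3 / g * (b1 * x2 t))).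
  { intro t. apply is_derive_scal. apply sol. }
  assert (hlev : forall t, x2 t ^ 2 + x3 t ^ 2 / (g * g) = s * s).
  { intro t. rewrite hs2, <- (lev t), hb2e. field. split; lra. }
  destruct (angle (x2 0 / s) (x3 0 / (g * s))) as [p [hc hsn]].
  { replace ((x2 0 / s) ^ 2 + (x3 0 / (g * s)) ^ 2) with ((x2 0 ^ 2 + x3 0 ^ 2 / (g * g)) / (s * s)) by (field; lra).
    rewrite hlev. field. lra. }
  set (th := fun t => p + RInt D 0 t).
  assert (hth : forall t, is_derive th t (D t)).
  { intro t. assert (h := antider D (fun t => ex_derive_continuous D t (ex_intro _ _ (hD t))) t).
    unfold th. replace (D t) with (plus zero (D t)) by (apply plus_zero_l). apply (is_derive_plus (fun _ => p) (fun t => RInt D 0 t)). exact (is_derive_const (V:=R_NormedModule) p t). exact h. }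
  set (E := fun t => (x2 t - s * cos (th t)) ^ 2 + (x3 t - g * s * sin (th t)) ^ 2 * / (g * g)).
  assert (hE : forall t, is_derive E t 0).
  { intro t. destruct (sol t) as [h1 [h2 h3]]. assert (h4 := hth t).
    unfold E. auto_derive. exd. subst_derivs. unfold D. rewrite hb2e. field. lra. }
  assert (hE0 : E 0 = 0).
  { unfold E, th. rewrite RInt_point. change (zero : R) with 0. rewrite Rplus_0_r, hc, hsn.
    field. lra. }
  assert (hEt : forall t, E t = 0).
  { intro t. destruct (Rtotal_order t 0) as [lt | [eq | gt]].
    - rewrite <- hE0. apply (eq_is_derive E t 0). intros; apply hE. exact lt.
    - rewrite eq; auto.
    - rewrite <- hE0. symmetry. apply (eq_is_derive E 0 t). intros; apply hE. exact gt. }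
  assert (hk : 0 < / (g * g)) by (apply Rinv_0_lt_compat; nra).
  assert (hxx : forall t, x2 t = s * cos (th t) /\ x3 t = g * s * sin (th t)).
  { intro t. specialize (hEt t). unfold E in hEt.
    set (a := x2 t - s * cos (th t)) in hEt. set (b := x3 t - g * s * sin (th t)) in hEt.
    assert (ha : 0 <= a ^ 2) by apply pow2_ge_0. assert (hbb : 0 <= b ^ 2) by apply pow2_ge_0.
    assert (hab : 0 <= b ^ 2 * / (g * g)) by (apply Rmult_le_pos; lra).
    assert (a ^ 2 = 0) by lra. assert (b ^ 2 * / (g * g) = 0) by lra.
    assert (a = 0) by (nra).
    assert (b ^ 2 = 0) by (apply Rmult_integral in H1; destruct H1; auto; lra).
    assert (b = 0) by (nra).
    unfold a, b in *. split; lra. }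
  exists th, D. split.
  + intro t. split; auto. fold g s. replace (b1 * b3 / g * s * cos (th t)) with (b3 / g * (b1 * x2 t)).
    apply hD. rewrite (proj1 (hxx t)). field. lra.
  + intro t. fold g s. split; [ | apply hxx]. unfold D. field. split; lra.
- intros theta dtheta pend x1 x2 x3. split.
  + intro t. destruct (pend t) as [h1 h2]. unfold x1, x2, x3. split; [|split].
    * auto_derive. exd. subst_derivs. fold g s. field. split; lra.
    * auto_derive. exd. subst_derivs. fold g s. rewrite hb2e. field. split; lra.
    * auto_derive. exd. subst_derivs. fold g s. field. lra.
  + intro t. unfold x2, x3. rewrite hb2e.
    replace (2 * H) with (s * s) by auto.
    assert (hcs := sin2_cos2 (theta t)). unfold Rsqr in hcs.
    transitivity (s * s * (sin (theta t) * sin (theta t) + cos (theta t) * cos (theta t))).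
    field. split; lra. rewrite hcs. ring.
Qed.
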